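(* Let $q$ be a prime power and $1\le k\le n-1$. If there exists a Cameron-Liebler $k$-set with parameter $x$ in $\mathrm{AG}(n,q)$, then there exists a Cameron-Liebler $k$-set of parameter $x+\frac{q^{n-k}-1}{q^{k+1}-1}$ in the projective closure $\mathrm{PG}(n,q)$ of $\mathrm{AG}(n,q)$.
   Context: A $k$-space is a $k$-dimensional projective subspace. $\left[{a\atop b}\right]_q=\frac{(q^a-1)\cdots(q^{a-b+1}-1)}{(q^b-1)\cdots(q-1)}$. $\mathrm{AG}(n,q)$ is $\mathrm{PG}(n,q)$ with a hyperplane $\pi_\infty$ removed; affine points are points outside $\pi_\infty$, affine $k$-spaces are $k$-spaces not contained in $\pi_\infty$. Let $P_n$ be the point-($k$-space) incidence matrix of $\mathrm{PG}(n,q)$ and $A_n$ the incidence matrix of affine points versus affine $k$-spaces. A set $\mathcal{L}$ of $k$-spaces of $\mathrm{PG}(n,q)$ is a Cameron-Liebler $k$-set of $\mathrm{PG}(n,q)$ if its characteristic vector lies in the real row space $\mathrm{Im}(P_n^T)$, with parameter $|\mathcal{L}|/\left[{n\atop k}\right]_q$; a set of affine $k$-spaces is a Cameron-Liebler $k$-set of $\mathrm{AG}(n,q)$ if its characteristic vector lies in $\mathrm{Im}(A_n^T)$, with parameter $|\mathcal{L}|/\left[{n\atop k}\right]_q$. *)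

(* Defs.v *)
From HB Require Import structures.
From mathcomp Require Import all_boot all_order all_algebra all_field.
From mathcomp Require Import reals.
Unset Printing Implicit Defensive.
Import Order.TTheory GRing.Theory Num.Theory.
Local Open Scope ring_scope.

(* PG(n,q) is modelled by the vector space F^(n+1) = 'rV[F]_(n.+1) over a finite
   field F with q = #|F|.  A projective subspace of vector dimension d is
   represented canonically by its square generator matrix <<A>>%MS. *)
Definition subspaces_dim (F : finFieldType) (N d : nat) : {set 'M[F]_N} :=
  [set A : 'M[F]_N | (<<A>>%MS == A) && (\rank A == d)].

Definition kspaces (F : finFieldType) (n k : nat) := subspaces_dim F n.+1 k.+1.
Definition points (F : finFieldType) (n : nat) := kspaces F n 0.
Definition hyperplanes (F : finFieldType) (n : nat) := subspaces_dim F n.+1 n.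

(* affine points / affine k-spaces of AG(n,q) = PG(n,q) minus pi_inf = H *)
Definition affine_points (F : finFieldType) (n : nat) (H : 'M[F]_n.+1) :=
  [set p in points F n | ~~ (p <= H)%MS].
Definition affine_kspaces (F : finFieldType) (n k : nat) (H : 'M[F]_n.+1) :=
  [set K in kspaces F n k | ~~ (K <= H)%MS].

Definition gauss_binom (R : realType) (q : R) (a b : nat) : R :=
  \prod_(i < b) ((q ^+ (a - i) - 1) / (q ^+ i.+1 - 1)).

(* Cameron-Liebler k-set of PG(n,q): the characteristic vector of L lies in
   the real row space Im(P_n^T), i.e. chi_L = P_n^T w for some real w indexed
   by points: chi_L(K) = sum_{p point, p in K} w(p). *)
Definition CL_PG (R : realType) (F : finFieldType) (n k : nat)
    (L : {set 'M[F]_n.+1}) : Prop :=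
  L \subset kspaces F n k /\
  exists w : 'M[F]_n.+1 -> R,
    forall K, K \in kspaces F n k ->
      ((K \in L)%:R : R) = \sum_(p in points F n | (p <= K)%MS) w p.

(* Cameron-Liebler k-set of AG(n,q) (pi_inf = H): L is a set of affine
   k-spaces with chi_L in Im(A_n^T), A_n = affine points vs affine k-spaces. *)
Definition CL_AG (R : realType) (F : finFieldType) (n k : nat)
    (H : 'M[F]_n.+1) (L : {set 'M[F]_n.+1}) : Prop :=
  L \subset affine_kspaces F n k H /\
  exists w : 'M[F]_n.+1 -> R,
    forall K, K \in affine_kspaces F n k H ->
      ((K \in L)%:R : R) = \sum_(p in affine_points F n H | (p <= K)%MS) w p.

(* parameter |L| / [n choose k]_q (same normalisation in AG and PG) *)
Definition CL_param (R : realType) (F : finFieldType) (n k : nat)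
    (L : {set 'M[F]_n.+1}) : R :=
  (#|L|%:R) / gauss_binom R (#|F|%:R) n k.

(* Main.v *)
Require Import Defs.
From HB Require Import structures.
From mathcomp Require Import all_boot all_order all_algebra all_field.
Import Order.TTheory GRing.Theory Num.Theory.
Local Open Scope ring_scope.

Section Lin.
Variable F : finFieldType.

Lemma row_free_col (N d : nat) (r : 'rV[F]_N) (B : 'M[F]_(d, N)) :
  row_free (col_mx r B : 'M_(1 + d, N)) = row_free B && ~~ (r <= B)%MS.
Proof.
rewrite /row_free -addsmxE.
have [rB|nrB] := boolP (r <= B)%MS.
  rewrite andbF; have e := addsmx_idPr rB. rewrite e.
  by apply/negbTE; rewrite neq_ltn ltnS rank_leq_row.
have r0 : r != 0 by apply: contra nrB => /eqP ->; rewrite sub0mx.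
have c0 : \rank (r :&: B)%MS = 0%N.
  apply/eqP; rewrite eqn_leq leq0n andbT leqNgt; apply/negP => h.
  have le1 : (\rank (r :&: B)%MS <= \rank r)%N by rewrite mxrankS ?capmxSl.
  have e : \rank (r :&: B)%MS = \rank r by rewrite rank_rV r0 /= in le1 *; apply/eqP; rewrite eqn_leq le1 h.
  have hs : (r <= r :&: B)%MS by rewrite -(mxrank_leqif_sup (capmxSl r B)).2 e.
  by move: nrB; rewrite (submx_trans hs) ?capmxSr.
have := mxrank_sum_cap r B; rewrite c0 addn0 => ->.
by rewrite rank_rV r0 andbT eqn_add2l.
Qed.

Lemma card_sub_rV (m N : nat) (V : 'M[F]_(m, N)) :
  #|[set v : 'rV[F]_N | (v <= V)%MS]| = (#|F| ^ \rank V)%N.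
Proof.
have -> : [set v : 'rV[F]_N | (v <= V)%MS] =
   (fun u : 'rV[F]_(\rank V) => u *m row_base V) @: setT.
  apply/setP => v; rewrite inE; apply/idP/imsetP.
    by rewrite -(eq_row_base V) => /submxP [u ->]; exists u.
  by case=> u _ ->; rewrite -(eq_row_base V) submxMl.
rewrite card_imset; last exact: row_free_inj (row_base_free V).
by rewrite cardsT card_mx mul1n.
Qed.

Lemma count_free (m N d : nat) (V : 'M[F]_(m, N)) :
  #|[set B : 'M[F]_(d, N) | row_free B && (B <= V)%MS]| =
  (\prod_(i < d) (#|F| ^ \rank V - #|F| ^ i))%N.
Proof.
elim: d => [|d IH].
  have h := card_mx F 0 N; rewrite mul0n expn0 in h.
  rewrite big_ord0; apply/eqP; rewrite -h eqn_leq; apply/andP; split.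
    exact: max_card.
  by apply: subset_leq_card; apply/subsetP => B _; rewrite inE flatmx0 sub0mx /row_free mxrank0 andbT.
rewrite big_ord_recr /= -IH.
set q := #|F|.
pose f := fun x : 'M[F]_(d, N) * 'rV[F]_N => (col_mx x.2 x.1 : 'M[F]_(1 + d, N)).
have fbij : bijective f.
  exists (fun B : 'M[F]_(1 + d, N) => (dsubmx B, usubmx B)).
    by case=> b a; rewrite /f /= col_mxKu col_mxKd.
  by move=> B; rewrite /f /= vsubmxK.
rewrite -!sum1_card.
rewrite (reindex f) /=; last by apply: onW_bij.
rewrite (eq_bigl (fun x => (row_free x.1 && (x.1 <= V)%MS) && ((x.2 <= V)%MS && ~~ (x.2 <= x.1)%MS))); last first.
  case=> b a /=; rewrite /f /= inE row_free_col.
  rewrite (col_mx_sub a b V).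
  by case: (row_free b); case: (a <= V)%MS; case: (b <= V)%MS; case: (a <= b)%MS.
rewrite -(pair_big_dep (fun b : 'M[F]_(d, N) => row_free b && (b <= V)%MS) (fun b (a : 'rV[F]_N) => (a <= V)%MS && ~~ (a <= b)%MS) (fun _ _ => 1%N)) /=.
rewrite big_distrl /=.
apply: eq_big => [b | b /andP [fb bV]]; first by rewrite inE.
rewrite mul1n sum1_card.
have -> : #|[pred a : 'rV[F]_N | (a <= V)%MS && ~~ (a <= b)%MS]| =
   #|[set a : 'rV[F]_N | (a <= V)%MS] :\: [set a : 'rV[F]_N | (a <= b)%MS]|.
  by apply: eq_card => a; rewrite !inE andbC.
rewrite cardsD !card_sub_rV.
have -> : [set a : 'rV[F]_N | (a <= V)%MS] :&: [set a : 'rV[F]_N | (a <= b)%MS] = [set a : 'rV[F]_N | (a <= b)%MS].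
  by apply/setP => a; rewrite !inE; case ab: (a <= b)%MS; rewrite ?andbF ?andbT // (submx_trans ab).
by rewrite card_sub_rV (eqP fb).
Qed.

Lemma count_sub (N d m : nat) (V : 'M[F]_(m, N)) :
  (#|[set A in subspaces_dim F N d | (A <= V)%MS]| * \prod_(i < d) (#|F| ^ d - #|F| ^ i))%N
  = (\prod_(i < d) (#|F| ^ \rank V - #|F| ^ i))%N.
Proof.
set q := #|F|.
rewrite -(count_free _ _ d V) -[in RHS]sum1_card.
rewrite (partition_big (fun B : 'M[F]_(d, N) => <<B>>%MS)
          (fun A => A \in [set A in subspaces_dim F N d | (A <= V)%MS])) /=; last first.
  move=> B; rewrite !inE => /andP [fB BV].
  rewrite genmx_id eqxx; rewrite genmxE; rewrite genmxE (eqP fB) eqxx BV //.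
rewrite -(sum_nat_const (mem [set A in subspaces_dim F N d | (A <= V)%MS])); apply: eq_bigr => A; rewrite /subspaces_dim !inE.
case/andP => /andP [gA rA] AV; move/eqP: gA => gA; move/eqP: rA => rA.
apply/esym.
have -> : (\prod_(i < d) (q ^ d - q ^ i))%N = (\prod_(i < d) (q ^ \rank A - q ^ i))%N by rewrite rA.
rewrite sum1_card -(count_free _ _ d A); apply: eq_card => B; rewrite !inE.
rewrite unfold_in /= inE.
apply/idP/idP.
  case/andP => /andP [fB BV] /eqP gB; rewrite fB /=.
  have : (B <= <<B>>)%MS by rewrite genmxE.
  by rewrite gB.
case/andP => fB BA; rewrite fB (submx_trans BA AV) /=.
rewrite -gA; apply/eqP; apply: eq_genmx; apply/eqmxP.
by rewrite -(mxrank_leqif_eq BA).2 (eqP fB) rA.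
Qed.

End Lin.

From mathcomp Require Import reals.
From mathcomp Require Import ring zify.

Section Real.
Variable R : realType.

Lemma gauss_eq (q : R) (a d : nat) : 1 < q -> (d <= a)%N ->
  gauss_binom R q a d * \prod_(i < d) (q ^+ d - q ^+ i) = \prod_(i < d) (q ^+ a - q ^+ i).
Proof.
move=> hq hda.
have fact : forall j i, (i <= j)%N -> q ^+ j - q ^+ i = q ^+ i * (q ^+ (j - i) - 1).
  by move=> j i hij; rewrite mulrBr mulr1 -exprD subnKC.
have E1 : \prod_(i < d) (q ^+ d - q ^+ i) = \prod_(i < d) q ^+ i * \prod_(i < d) (q ^+ i.+1 - 1).
  rewrite (eq_bigr _ (fun (i : 'I_d) _ => fact d i (ltnW (ltn_ord i)))) big_split /=; congr (_ * _).
  rewrite (reindex_inj rev_ord_inj) /=; apply: eq_bigr => i _; rewrite subKn //.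
have E2 : \prod_(i < d) (q ^+ a - q ^+ i) = \prod_(i < d) q ^+ i * \prod_(i < d) (q ^+ (a - i) - 1).
  rewrite (eq_bigr _ (fun (i : 'I_d) _ => fact a i (leq_trans (ltnW (ltn_ord i)) hda))) big_split //.
have Y0 : \prod_(i < d) (q ^+ i.+1 - 1) != 0.
  apply/prodf_neq0 => i _; rewrite subr_eq0; apply/negP => /eqP h.
  by move: (exprn_egt1 i.+1 hq); rewrite h ltxx.
rewrite /gauss_binom E1 E2 prodf_div.
by rewrite (mulrC (\prod_(i < d) q ^+ i)) mulrA divfK // mulrC.
Qed.

Lemma sum_const_pred (T : finType) (P : pred T) (c : R) :
  \sum_(i | P i) c = c *+ #|[set i | P i]|.
Proof. by rewrite -sumr_const; apply: eq_bigl => i; rewrite inE. Qed.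

End Real.

Theorem theorem3p5 (R : realType) (F : finFieldType) (n k : nat)
    (H : 'M[F]_n.+1) (L : {set 'M[F]_n.+1}) :
  (1 <= k)%N -> (k <= n.-1)%N ->
  H \in hyperplanes F n ->
  CL_AG R F n k H L ->
  exists L' : {set 'M[F]_n.+1},
    CL_PG R F n k L' /\
    CL_param R F n k L' =
      CL_param R F n k L
      + ((#|F|%:R : R) ^+ (n - k) - 1) / ((#|F|%:R : R) ^+ k.+1 - 1).
Proof.
move=> hk hkn hH [Lsub [w hw]].
have q1 : (1 < #|F|)%N := card_finNzRing_gt1 F.
have hqR : 1 < (#|F|%:R : R) by rewrite ltr1n.
have n0 : (0 < n)%N := leq_trans hk (leq_trans hkn (leq_pred n)).
have hkn' : (k < n)%N by rewrite -(prednK n0) ltnS.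
have rH : \rank H = n by move: hH; rewrite /hyperplanes /subspaces_dim inE => /andP [_ /eqP].
have cnt : forall X : 'M[F]_n.+1,
    (#|[set p in points F n | (p <= X)%MS]|%:R : R) * (#|F|%:R - 1) = #|F|%:R ^+ \rank X - 1.
  move=> X; have := count_sub F n.+1 1 _ X; rewrite !big_ord1 expn1 expn0 => h.
  have h' := congr1 (fun x : nat => (x%:R : R)) h; move: h'.
  by rewrite /= natrM !natrB ?expn_gt0 ?(ltnW q1) // natrX.
set qR := (#|F|%:R : R) in hqR cnt *.
have qR1 : qR - 1 != 0 by rewrite subr_eq0 gt_eqF.
have qRX : forall j, (0 < j)%N -> qR ^+ j - 1 != 0.
  by move=> j j0; rewrite subr_eq0 gt_eqF // exprn_egt1 // -lt0n.
have qR0 : forall j, qR ^+ j != 0 by move=> j; rewrite expf_neq0 // gt_eqF // (lt_trans ltr01).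
set S := [set K in kspaces F n k | (K <= H)%MS].
have LS : forall K, K \in L -> ~~ (K <= H)%MS.
  by move=> K /(subsetP Lsub); rewrite inE => /andP [].
exists (L :|: S); split.
  split.
    apply/subsetP => K; rewrite inE => /orP [/(subsetP Lsub)|]; rewrite inE => /andP [] //.
  pose a := (qR - 1) / (qR ^+ k.+1 - 1).
  pose b := - (qR ^+ k - 1) / ((qR ^+ k.+1 - 1) * qR ^+ k).
  exists (fun p => (if (p <= H)%MS then 0 else w p) + (if (p <= H)%MS then a else b)).
  move=> K hK; rewrite big_split /=.
  have rK : \rank K = k.+1 by move: hK; rewrite /kspaces /subspaces_dim inE => /andP [_ /eqP].
  have cK := cnt K; rewrite rK in cK.
  have [KH|KH] := boolP (K <= H)%MS.
    have nKL : K \notin L by apply/negP => /LS; rewrite KH.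
    have KS : K \in S by rewrite inE hK KH.
    rewrite inE KS orbT.
    rewrite big1 ?add0r; last by move=> p /andP [_ pK]; rewrite (submx_trans pK KH).
    rewrite (eq_bigr (fun _ => a)); last by move=> p /andP [_ pK]; rewrite (submx_trans pK KH).
    rewrite sum_const_pred -[a *+ _]mulr_natr.
    have cKe : (#|[set p in points F n | (p <= K)%MS]|%:R : R) = (qR ^+ k.+1 - 1) / (qR - 1)
      by rewrite -cK mulfK.
    rewrite cKe /a /=; have h3 := qRX k.+1 isT; field.
    by rewrite h3 qR1.
  have nKS : K \notin S by rewrite inE (negbTE KH) andbF.
  have hKA : K \in affine_kspaces F n k H by rewrite inE hK KH.
  rewrite inE (negbTE nKS) orbF (hw K hKA).
  suff -> : \sum_(p in points F n | (p <= K)%MS) (if (p <= H)%MS then a else b) = 0.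
    rewrite addr0 big_mkcond [RHS]big_mkcond; apply: eq_bigr => p _.
    rewrite /affine_points inE.
    by case: (p \in points F n); case: (p <= K)%MS; case: (p <= H)%MS.
  rewrite (bigID (fun p => (p <= H)%MS)) /=.
  rewrite (eq_bigr (fun _ => a)); last by move=> p /andP [_ ->].
  rewrite [X in _ + X](eq_bigr (fun _ => b)); last by move=> p /andP [_ /negbTE ->].
  rewrite !sum_const_pred -[a *+ _]mulr_natr -[b *+ _]mulr_natr.
  have e1 : #|[set i | (i \in points F n) && (i <= K)%MS && (i <= H)%MS]| =
            #|[set p in points F n | (p <= (K :&: H))%MS]|.
    by apply: eq_card => p; rewrite !inE sub_capmx andbA.
  have e12 : (#|[set i | (i \in points F n) && (i <= K)%MS && (i <= H)%MS]| +
             #|[set i | (i \in points F n) && (i <= K)%MS && ~~ (i <= H)%MS]|)%N =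
             #|[set p in points F n | (p <= K)%MS]|.
    rewrite -(cardsID [set p | (p <= H)%MS] [set p in points F n | (p <= K)%MS]).
    have x1 : #|[set i | (i \in points F n) && (i <= K)%MS & (i <= H)%MS]| =
       #|[set p in points F n | (p <= K)%MS] :&: [set p | (p <= H)%MS]|.
      by apply: eq_card => p; rewrite !inE.
    have x2 : #|[set i | (i \in points F n) && (i <= K)%MS & ~~ (i <= H)%MS]| =
       #|[set p in points F n | (p <= K)%MS] :\: [set p | (p <= H)%MS]|.
      by apply: eq_card => p; rewrite !inE andbC.
    by rewrite x1 x2.
  have rc : \rank (K :&: H)%MS = k.
    have rs : \rank (K + H)%MS = n.+1.
      apply/eqP; rewrite eqn_leq rank_leq_col /=.
      case: (mxrank_leqif_sup (addsmxSr K H)) => le e; rewrite rH in le e.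
      by rewrite ltn_neqAle le andbT e addsmx_sub (negbTE KH).
    have := mxrank_sum_cap K H; rewrite rK rH rs; lia.
  have c1 := cnt (K :&: H)%MS; rewrite rc -e1 in c1.
  move: e12 c1 cK.
  set c1 := #|[set i | (i \in points F n) && (i <= K)%MS && (i <= H)%MS]|.
  set c2 := #|[set i | (i \in points F n) && (i <= K)%MS && ~~ (i <= H)%MS]|.
  move=> <-; rewrite natrD => h1 h2.
  have c1e : (c1%:R : R) = (qR ^+ k - 1) / (qR - 1) by rewrite -h1 mulfK.
  have c2e : (c2%:R : R) = qR ^+ k.
    apply: (mulIf qR1); rewrite mulrDl h1 in h2.
    by apply: (addrI (qR ^+ k - 1)); rewrite h2 exprS; ring.
  rewrite c1e c2e /a /b.
  have := qRX k.+1 isT; have := qR0 k.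
  move=> h3 h4; field.
  by rewrite h4 h3 qR1.
have dLS : L :&: S = set0.
  apply/setP => K; rewrite !inE; apply/negP => /andP [/LS nKH /andP [_ KH]].
  by rewrite KH in nKH.
rewrite /CL_param cardsU dLS cards0 subn0 natrD mulrDl; congr (_ + _).
have P0 : \prod_(i < k.+1) (qR ^+ k.+1 - qR ^+ i) != 0.
  apply/prodf_neq0 => i _; rewrite subr_eq0; apply/negP => /eqP h.
  have := ltn_ord i; rewrite -(ltr_eXn2l hqR) h ltxx //.
have hS : (#|S|%:R : R) = gauss_binom R qR n k.+1.
  have := count_sub F n.+1 k.+1 _ H; rewrite rH => h.
  have h' := congr1 (fun x : nat => (x%:R : R)) h; move: h'.
  rewrite /= natrM !natr_prod.
  have E1 : \prod_(i < k.+1) (((#|F| ^ k.+1 - #|F| ^ i)%N)%:R : R) = \prod_(i < k.+1) (qR ^+ k.+1 - qR ^+ i).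
    apply: eq_bigr => i _; rewrite natrB ?natrX //.
    by rewrite leq_pexp2l ?(ltnW q1) // ltnW.
  have E2 : \prod_(i < k.+1) (((#|F| ^ n - #|F| ^ i)%N)%:R : R) = \prod_(i < k.+1) (qR ^+ n - qR ^+ i).
    apply: eq_bigr => i _; rewrite natrB ?natrX //.
    by rewrite leq_pexp2l ?(ltnW q1) // ltnW // (leq_trans (ltn_ord i)).
  rewrite E1 E2.
  rewrite -(@gauss_eq R qR n k.+1 hqR hkn') => h2.
  exact: (mulIf P0 h2).
have G0 : gauss_binom R qR n k != 0.
  apply/prodf_neq0 => i _; rewrite mulf_neq0 ?invr_neq0 //; apply: qRX.
    by rewrite subn_gt0 (ltn_trans (ltn_ord i)).
  by [].
rewrite hS /gauss_binom big_ord_recr /= -/(gauss_binom R qR n k).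
by rewrite mulrC mulKf.
Qed.
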